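(* Let $H$ be a separable complex Hilbert space and $U:H\to H$ a unitary operator. Then $U$ is recurrent if and only if $U$ is rigid.
   Context: $U$ is recurrent if for every non-empty open $V\subset H$ there is a positive integer $k$ with $V\cap U^{-k}(V)\neq\emptyset$; $U$ is rigid if there is an increasing sequence of positive integers $(k_n)$ with $U^{k_n}x\to x$ for every $x\in H$. *)

(* Defs.v *)
From mathcomp Require Import all_boot all_algebra.
From mathcomp Require Import complex.
From mathcomp Require Import reals.
Set Implicit Arguments. Unset Strict Implicit. Unset Printing Implicit Defensive.
Import GRing.Theory Num.Theory.
Local Open Scope ring_scope.
Local Open Scope complex_scope.

Section Hilbert.
Variable R : realType.
Variable V : lmodType R[i].

(* A complex inner product: linear in the first argument, conjugate
   symmetric, positive definite (0 <= z in R[i] means z real and >= 0). *)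
Definition inner_product (ip : V -> V -> R[i]) : Prop :=
  [/\ forall (a : R[i]) (x y z : V), ip (a *: x + y) z = a * ip x z + ip y z,
      forall x y : V, ip y x = (ip x y)^*,
      forall x : V, 0 <= ip x x
    & forall x : V, ip x x = 0 -> x = 0].

Variable ip : V -> V -> R[i].

Definition hnorm (x : V) : R := Num.sqrt (complex.Re (ip x x)).
Definition hdist (x y : V) : R := hnorm (x - y).

Definition hconverges (u : nat -> V) (l : V) : Prop :=
  forall e : R, 0 < e -> exists N : nat, forall n, (N <= n)%N -> hdist (u n) l < e.

Definition hcauchy (u : nat -> V) : Prop :=
  forall e : R, 0 < e -> exists N : nat,
    forall m n, (N <= m)%N -> (N <= n)%N -> hdist (u m) (u n) < e.

Definition hcomplete : Prop :=
  forall u : nat -> V, hcauchy u -> exists l, hconverges u l.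

Definition hseparable : Prop :=
  exists d : nat -> V, forall (x : V) (e : R), 0 < e -> exists n, hdist x (d n) < e.

Definition hilbert_space : Prop := inner_product ip /\ hcomplete.

Definition hopen (S : V -> Prop) : Prop :=
  forall x, S x -> exists2 e : R, 0 < e & forall y, hdist x y < e -> S y.

Definition unitary (U : V -> V) : Prop :=
  [/\ forall (a : R[i]) (x y : V), U (a *: x + y) = a *: U x + U y,
      forall y : V, exists x, U x = y
    & forall x y : V, ip (U x) (U y) = ip x y].

Definition recurrent (U : V -> V) : Prop :=
  forall W : V -> Prop, hopen W -> (exists x, W x) ->
    exists k : nat, (0 < k)%N /\ exists x, W x /\ W (iter k U x).

Definition rigid (U : V -> V) : Prop :=
  exists k : nat -> nat,
    [/\ forall n, (0 < k n)%N, forall n, (k n < k n.+1)%N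
      & forall x : V, hconverges (fun n => iter (k n) U x) x].

End Hilbert.

(* Submission.v *)
From Pilot Require Import Defs.
From mathcomp Require Import all_boot all_algebra.
From mathcomp Require Import complex.
From mathcomp Require Import reals.
From mathcomp Require Import ring lra.
From Stdlib Require Import Classical ClassicalEpsilon.
Set Implicit Arguments. Unset Strict Implicit. Unset Printing Implicit Defensive.
Import GRing.Theory Num.Theory.
From mathcomp Require Import order.
Import Order.TTheory.
Local Open Scope ring_scope.
Local Open Scope complex_scope.
Local Notation Rc := complex.Re.
Local Notation Ic := complex.Im.
Section T.
Variable R : realType.
Lemma ReD (x y : R[i]) : Rc (x + y) = Rc x + Rc y. Proof. by case: x => a b; case: y => c d. Qed.
Lemma ImD (x y : R[i]) : Ic (x + y) = Ic x + Ic y. Proof. by case: x => a b; case: y => c d. Qed.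
Lemma ReM (x y : R[i]) : Rc (x * y) = Rc x * Rc y - Ic x * Ic y. Proof. by case: x => a b; case: y => c d. Qed.
Lemma ImM (x y : R[i]) : Ic (x * y) = Rc x * Ic y + Ic x * Rc y. Proof. case: x => a b; case: y => c d /=. ring. Qed.
Lemma ReJ (x : R[i]) : Rc (x^*) = Rc x. Proof. by case: x. Qed.
Lemma ImJ (x : R[i]) : Ic (x^*) = - Ic x. Proof. by case: x. Qed.
Lemma Rec (x : R) : Rc (x%:C) = x. Proof. by []. Qed.
Lemma Imc (x : R) : Ic (x%:C) = 0. Proof. by []. Qed.
Lemma ReN (x : R[i]) : Rc (- x) = - Rc x. Proof. by case: x. Qed.
Lemma ImN (x : R[i]) : Ic (- x) = - Ic x. Proof. by case: x. Qed.
Lemma cV (x : R) : (x%:C)^-1 = (x^-1)%:C. Proof. by rewrite fmorphV. Qed.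
Lemma conjD (x y : R[i]) : (x + y)^* = x^* + y^*. Proof. by case: x => a b; case: y => c d /=; rewrite opprD. Qed.
Lemma conjM (x y : R[i]) : (x * y)^* = x^* * y^*. Proof. case: x => a b; case: y => c d /=. congr (_ +i* _); ring. Qed.
Lemma conjN (x : R[i]) : (- x)^* = - x^*. Proof. by case: x. Qed.
Lemma conjK (x : R[i]) : (x^*)^* = x. Proof. by case: x => a b /=; rewrite opprK. Qed.
Lemma c_ext (x y : R[i]) : Rc x = Rc y -> Ic x = Ic y -> x = y.
Proof. by case: x => a b; case: y => c d /= -> ->. Qed.
End T.
Section H.
Variable R : realType.
Variable V : lmodType R[i].
Variable ip : V -> V -> R[i].
Hypothesis hip : inner_product ip.

Definition nsq (v : V) : R := Rc (ip v v).
Definition cn2 (z : R[i]) : R := Rc z ^+ 2 + Ic z ^+ 2.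

Lemma ipDl x y z : ip (x + y) z = ip x z + ip y z.
Proof. by case: hip => h _ _ _; rewrite -(scale1r x) h mul1r scale1r. Qed.
Lemma ip0l z : ip 0 z = 0.
Proof. by apply/eqP; rewrite -(addrI _ (_ : ip 0 z + ip 0 z = ip 0 z + 0)) // addr0 -ipDl addr0. Qed.
Lemma ipZl a x z : ip (a *: x) z = a * ip x z.
Proof. by case: hip => h _ _ _; rewrite -(addr0 (a *: x)) h ip0l addr0. Qed.
Lemma ipC x y : ip y x = (ip x y)^*.
Proof. by case: hip. Qed.
Lemma ipDr x y z : ip z (x + y) = ip z x + ip z y.
Proof. by rewrite (ipC (x+y)) (ipC x) (ipC y) ipDl conjD. Qed.
Lemma ipZr a x z : ip z (a *: x) = a^* * ip z x.
Proof. by rewrite (ipC (a *: x)) (ipC x) ipZl conjM. Qed.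
Lemma ipNl x z : ip (- x) z = - ip x z.
Proof. by rewrite -scaleN1r ipZl mulN1r. Qed.
Lemma ipNr x z : ip z (- x) = - ip z x.
Proof. by rewrite (ipC (- x)) (ipC x) ipNl conjN. Qed.
Lemma ip0r z : ip z 0 = 0.
Proof. rewrite (ipC 0) ip0l; exact: conjc0. Qed.
Lemma ipBl x y z : ip (x - y) z = ip x z - ip y z.
Proof. by rewrite ipDl ipNl. Qed.
Lemma ipBr x y z : ip z (x - y) = ip z x - ip z y.
Proof. by rewrite ipDr ipNr. Qed.

Lemma ip_real x : ip x x = (nsq x)%:C.
Proof.
case: hip => _ _ h _; have := h x; rewrite lecE /= => /andP [/eqP h1 _].
by apply: c_ext => //=; rewrite -h1.
Qed.
Lemma nsq_ge0 x : 0 <= nsq x.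
Proof. by case: hip => _ _ h _; have := h x; rewrite ip_real lecR. Qed.
Lemma nsq_eq0 x : nsq x = 0 -> x = 0.
Proof. by case: hip => _ _ _ h e; apply: h; rewrite ip_real e. Qed.
Lemma nsq0 : nsq 0 = 0.
Proof. by rewrite /nsq ip0l. Qed.

Lemma nsqD a b : nsq (a + b) = nsq a + nsq b + 2 * Rc (ip a b).
Proof.
rewrite /nsq ipDl !ipDr !ReD (ipC a b) ReJ; lra.
Qed.
Lemma nsqZ c a : nsq (c *: a) = cn2 c * nsq a.
Proof.
rewrite /nsq ipZl ipZr ip_real !ReM !ImM !ReJ !ImJ /cn2 /=; ring.
Qed.
Lemma nsqN a : nsq (- a) = nsq a.
Proof. by rewrite /nsq ipNl ipNr opprK. Qed.
Lemma nsqB a b : nsq (a - b) = nsq a + nsq b - 2 * Rc (ip a b).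
Proof. rewrite nsqD nsqN ipNr ReN; lra. Qed.
Lemma nsqBC a b : nsq (a - b) = nsq (b - a).
Proof. by rewrite -nsqN opprB. Qed.
Lemma nsq_le2 a b : nsq (a + b) <= 2 * nsq a + 2 * nsq b.
Proof.
have := nsq_ge0 (a - b); rewrite nsqB nsqD; lra.
Qed.

Lemma CS_re a b : Rc (ip a b) ^+ 2 <= nsq a * nsq b.
Proof.
have [a0|] := eqVneq (nsq a) 0.
  by rewrite (nsq_eq0 a0) ip0l /= expr0n /= nsq0 mul0r.
move=> na0; have napos : 0 < nsq a by rewrite lt0r na0 nsq_ge0.
set r := Rc (ip a b).
have := nsq_ge0 ((- (r / nsq a))%:C *: a + b).
rewrite nsqD nsqZ ipZl ReM /cn2 /= expr0n /= addr0 mul0r subr0.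
rewrite -/r => h.
have : 0 <= nsq a * ((- (r / nsq a)) ^+ 2 * nsq a + nsq b + 2 * (- (r / nsq a) * r)) by apply: mulr_ge0 => //; exact: ltW.
have -> : nsq a * ((- (r / nsq a)) ^+ 2 * nsq a + nsq b + 2 * (- (r / nsq a) * r)) = nsq a * nsq b - r ^+ 2.
  by field; rewrite na0.
lra.
Qed.

Lemma cn2_ge0 z : 0 <= cn2 z.
Proof. by rewrite /cn2 addr_ge0 // sqr_ge0. Qed.
Lemma cn20 : cn2 0 = 0.
Proof. by rewrite /cn2 /= expr0n /= addr0. Qed.
Lemma Re_le_cn2 z : Rc z ^+ 2 <= cn2 z.
Proof. rewrite /cn2; have := sqr_ge0 (Ic z); lra. Qed.
Lemma cn2J z : cn2 (z^*) = cn2 z.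
Proof. by rewrite /cn2 ReJ ImJ sqrrN. Qed.
Lemma cn2R (l : R) : cn2 (l%:C) = l ^+ 2.
Proof. by rewrite /cn2 /= expr0n /= addr0. Qed.

Lemma proj_aux (z : R[i]) (n : R) : n != 0 ->
  cn2 (z / n%:C) * n - 2 * Rc ((z / n%:C)^* * z) = - (cn2 z / n).
Proof.
move=> n0; rewrite cV; case: z => a b; rewrite /cn2 /=.
field; exact: n0.
Qed.

Lemma nsq_proj w u : nsq u != 0 ->
  nsq (w - (ip w u / (nsq u)%:C) *: u) = nsq w - cn2 (ip w u) / nsq u.
Proof.
move=> nu0; rewrite nsqB nsqZ ipZr.
have := proj_aux (ip w u) nu0; lra.
Qed.

Lemma sq_le (s y : R) : 0 <= s -> 0 <= y -> s ^+ 2 <= y ^+ 2 -> s <= y.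
Proof. move=> h1 h2 h3; nra. Qed.
Lemma sq_lt (s y : R) : 0 <= s -> 0 <= y -> s ^+ 2 < y ^+ 2 -> s < y.
Proof. move=> h1 h2 h3; nra. Qed.
Lemma sq_ltI (s y : R) : 0 <= s -> s < y -> s ^+ 2 < y ^+ 2.
Proof. move=> h1 h2; nra. Qed.

Lemma hnormE v : hnorm ip v = Num.sqrt (nsq v).
Proof. by []. Qed.
Lemma hnorm_ge0 v : 0 <= hnorm ip v.
Proof. exact: sqrtr_ge0. Qed.
Lemma hnorm_sq v : hnorm ip v ^+ 2 = nsq v.
Proof. by rewrite hnormE sqr_sqrtr // nsq_ge0. Qed.
Lemma hnorm_lt v e : 0 < e -> (hnorm ip v < e) <-> (nsq v < e ^+ 2).
Proof.
move=> e0; split => h.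
  by rewrite -hnorm_sq; apply: sq_ltI => //; exact: hnorm_ge0.
apply: sq_lt; [exact: hnorm_ge0| exact: ltW|]; by rewrite hnorm_sq.
Qed.
Lemma hnormN v : hnorm ip (- v) = hnorm ip v.
Proof. by rewrite !hnormE nsqN. Qed.
Lemma hnormD a b : hnorm ip (a + b) <= hnorm ip a + hnorm ip b.
Proof.
apply: sq_le; first exact: hnorm_ge0.
  by apply: addr_ge0; exact: hnorm_ge0.
have h := CS_re a b.
have pa := hnorm_ge0 a; have pb := hnorm_ge0 b.
rewrite hnorm_sq nsqD -!hnorm_sq in h *.
set r := Rc (ip a b) in h *.
have : r <= hnorm ip a * hnorm ip b.
  have pp : 0 <= hnorm ip a * hnorm ip b by exact: mulr_ge0.
  case: (lerP r 0) => r0; first exact: le_trans r0 pp.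
  by apply: sq_le => //; [exact: ltW | rewrite exprMn].
nra.
Qed.
Lemma hdist_tri x y z : hdist ip x z <= hdist ip x y + hdist ip y z.
Proof.
rewrite /hdist; have -> : x - z = (x - y) + (y - z) by rewrite addrA subrK.
exact: hnormD.
Qed.
Lemma hdistC x y : hdist ip x y = hdist ip y x.
Proof. by rewrite /hdist -hnormN opprB. Qed.
End H.

Section U.
Variable R : realType.
Variable V : lmodType R[i].
Variable ip : V -> V -> R[i].
Hypothesis hip : inner_product ip.
Variable U : V -> V.
Hypothesis hU : unitary ip U.

Local Notation nsq := (nsq ip).

Lemma UD x y : U (x + y) = U x + U y.
Proof. by case: hU => h _ _; rewrite -(scale1r x) h !scale1r. Qed.
Lemma U0 : U 0 = 0.
Proof. have := UD 0 0; rewrite addr0 -{1}(addr0 (U 0)) => /addrI h0; by rewrite -h0. Qed.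
Lemma UZ a x : U (a *: x) = a *: U x.
Proof. by case: hU => h _ _; rewrite -(addr0 (a *: x)) h U0 addr0. Qed.
Lemma UN x : U (- x) = - U x.
Proof. by rewrite -scaleN1r UZ scaleN1r. Qed.
Lemma UB x y : U (x - y) = U x - U y.
Proof. by rewrite UD UN. Qed.

Lemma itD k x y : iter k U (x + y) = iter k U x + iter k U y.
Proof. by elim: k => //= k ->; rewrite UD. Qed.
Lemma itZ k a x : iter k U (a *: x) = a *: iter k U x.
Proof. by elim: k => //= k ->; rewrite UZ. Qed.
Lemma itN k x : iter k U (- x) = - iter k U x.
Proof. by elim: k => //= k ->; rewrite UN. Qed.
Lemma itB k x y : iter k U (x - y) = iter k U x - iter k U y.
Proof. by rewrite itD itN. Qed.
Lemma it0 k : iter k U 0 = 0.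
Proof. by elim: k => //= k ->; rewrite U0. Qed.
Lemma ip_it k x y : ip (iter k U x) (iter k U y) = ip x y.
Proof. by elim: k => //= k <-; case: hU => _ _ ->. Qed.
Lemma nsq_it k x : nsq (iter k U x) = nsq x.
Proof. by rewrite /Pilot.Submission.nsq ip_it. Qed.
Lemma it_surj k y : exists x, iter k U x = y.
Proof.
elim: k y => [|k IH] y; first by exists y.
case: hU => _ hs _; have [z <-] := hs y; have [x <-] := IH z.
by exists x.
Qed.
Lemma it_comm k n x : iter k U (iter n U x) = iter n U (iter k U x).
Proof. by rewrite -!iterD addnC. Qed.

Inductive Pspan (x0 : V) : V -> Prop :=
| Ps0 : Pspan x0 0
| PsS : forall (a : R[i]) (n : nat) v, Pspan x0 v -> Pspan x0 (a *: iter n U x0 + v).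

Lemma Ps_add x0 p q : Pspan x0 p -> Pspan x0 q -> Pspan x0 (p + q).
Proof.
elim=> [|a n v _ IH] hq; first by rewrite add0r.
by rewrite -addrA; apply: PsS; exact: IH.
Qed.
Lemma Ps_scale x0 c p : Pspan x0 p -> Pspan x0 (c *: p).
Proof.
elim=> [|a n v _ IH]; first by rewrite scaler0; exact: Ps0.
by rewrite scalerDr scalerA; apply: PsS.
Qed.
Lemma Ps_U x0 p : Pspan x0 p -> Pspan x0 (U p).
Proof.
elim=> [|a n v _ IH]; first by rewrite U0; exact: Ps0.
rewrite UD UZ; have -> : U (iter n U x0) = iter n.+1 U x0 by [].
exact: PsS.
Qed.
Lemma Ps_it x0 k p : Pspan x0 p -> Pspan x0 (iter k U p).
Proof. by elim: k => //= k IH hp; apply: Ps_U; exact: IH. Qed.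
Lemma Ps_gen x0 n : Pspan x0 (iter n U x0).
Proof. by rewrite -(addr0 (iter n U x0)) -{1}(scale1r (iter n U x0)); apply: PsS; exact: Ps0. Qed.

Definition Ls x0 v := exists N, Pspan x0 (iter N U v).
Lemma Ls0 x0 : Ls x0 0.
Proof. by exists 0%N; exact: Ps0. Qed.
Lemma Ls_P x0 v : Pspan x0 v -> Ls x0 v.
Proof. by exists 0%N. Qed.
Lemma Ls_lin x0 s u t : Ls x0 s -> Ls x0 u -> Ls x0 (s + t *: u).
Proof.
move=> [N1 h1] [N2 h2]; exists (N1 + N2)%N.
rewrite itD itZ; apply: Ps_add.
  by rewrite addnC iterD; exact: Ps_it.
by rewrite iterD; apply: Ps_scale; exact: Ps_it.
Qed.

Lemma Cbound_P x0 p : Pspan x0 p -> exists C, 0 <= C /\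
  forall k, nsq (iter k U p - p) <= C * nsq (iter k U x0 - x0).
Proof.
elim=> [|a n v _ [C [C0 hC]]].
  by exists 0; split => // k; rewrite it0 subr0 (nsq0 hip) mul0r.
exists (2 * cn2 a + 2 * C); split.
  by apply: addr_ge0; apply: mulr_ge0 => //; exact: cn2_ge0.
move=> k.
have -> : iter k U (a *: iter n U x0 + v) - (a *: iter n U x0 + v)
   = a *: iter n U (iter k U x0 - x0) + (iter k U v - v).
  by rewrite (itD k) (itZ k) it_comm (itB n) scalerBr opprD addrACA.
apply: le_trans (nsq_le2 hip _ _) _.
rewrite (nsqZ hip) nsq_it.
have := hC k; have := cn2_ge0 a; have := nsq_ge0 hip (iter k U x0 - x0); nra.
Qed.

Lemma Cbound_L x0 s : Ls x0 s -> exists C, 0 <= C /\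
  forall k, nsq (iter k U s - s) <= C * nsq (iter k U x0 - x0).
Proof.
move=> [N hN]; have [C [C0 hC]] := Cbound_P hN.
exists C; split => // k; rewrite -(nsq_it N) itB it_comm; exact: hC.
Qed.

Lemma nearorth x0 y (eta : R) : 0 < eta -> exists s, Ls x0 s /\
  forall u, Ls x0 u -> cn2 (ip (y - s) u) <= eta * nsq u.
Proof.
move=> e0; apply: NNPP => Hn.
have step : forall s, Ls x0 s -> exists u, Ls x0 u /\ eta * nsq u < cn2 (ip (y - s) u).
  move=> s Lss; apply: NNPP => H2; apply: Hn; exists s; split => // u Lu.
  rewrite leNgt; apply/negP => hlt; apply: H2; exists u; split => //.
have its : forall n : nat, exists s, Ls x0 s /\ nsq (y - s) <= nsq y - n%:R * eta.
  elim=> [|n [s [Lss hs]]].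
    by exists 0; split; [exact: Ls0 | rewrite subr0 mul0r subr0].
  have [u [Lu hu]] := step s Lss.
  have nu0 : nsq u != 0.
    apply/eqP => h0; move: hu; rewrite h0 (nsq_eq0 hip h0) ip0r // cn20 mulr0 ltxx //.
  have nupos : 0 < nsq u by rewrite lt0r nu0 nsq_ge0.
  exists (s + (ip (y - s) u / (nsq u)%:C) *: u); split; first exact: Ls_lin.
  rewrite opprD addrA (nsq_proj hip _ nu0).
  have : eta < cn2 (ip (y - s) u) / nsq u by rewrite ltr_pdivlMr.
  rewrite -natr1; lra.
have hb := archi_boundP (x := nsq y / eta) (divr_ge0 (nsq_ge0 hip y) (ltW e0)).
have [s [_ hs]] := its (Num.Def.archi_bound (nsq y / eta)).
have : nsq y < (Num.Def.archi_bound (nsq y / eta))%:R * eta by rewrite -ltr_pdivrMr.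
have := nsq_ge0 hip (y - s); lra.
Qed.

Lemma young (l a r eta : R) : 0 <= a -> 0 <= eta -> r ^+ 2 <= eta * a ->
  2 * l * r <= l ^+ 2 * a / 4 + 4 * eta.
Proof.
move=> a0 e0 h.
have [a00|an0] := eqVneq a 0.
  have hr : r ^+ 2 <= 0 by rewrite a00 mulr0 in h. have r0 : r = 0 by apply/eqP; rewrite -sqrf_eq0 eq_le hr sqr_ge0.
  rewrite r0 a00; nra.
have apos : 0 < a by rewrite lt0r an0.
have hsq := sqr_ge0 (l * a / 2 - 2 * r).
have : 0 <= a * (l ^+ 2 * a / 4 + 4 * eta - 2 * l * r) by nra.
rewrite pmulr_rge0 //; lra.
Qed.

Lemma key x y (eps : R) : 0 < eps -> exists z (del : R), 0 < del /\
  forall k, nsq (iter k U z - z) < del ->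
    nsq (iter k U x - x) < eps /\ nsq (iter k U y - y) < eps.
Proof.
move=> eps0.
pose eta := eps / 100.
have eta0 : 0 < eta by rewrite /eta divr_gt0.
have [s [Lss hs]] := nearorth x y eta0.
have [C [C0 hC]] := Cbound_L Lss.
pose l := 1 + C.
pose y2 := y - s.
exists ((l%:C) *: x + y2), eta; split => // k hk.
pose A := iter k U x - x.
pose B := iter k U y2 - y2.
have eqz : iter k U (l%:C *: x + y2) - (l%:C *: x + y2) = l%:C *: A + B.
  by rewrite (itD k) (itZ k) scalerBr opprD addrACA.
have [x' hx'] := it_surj k A.
have LA : Ls x A.
  have -> : A = iter k U x + (-1) *: x by rewrite scaleN1r.
  by apply: Ls_lin; apply: Ls_P; [exact: Ps_gen | exact: (Ps_gen x 0)].
have Lx' : Ls x x'.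
  by have [N hN] := LA; exists (N + k)%N; rewrite iterD hx'.
pose a := nsq A.
have ex' : nsq x' = a by rewrite -(nsq_it k) hx'.
have h1 := hs x' Lx'; have h2 := hs A LA.
rewrite -/y2 ex' in h1; rewrite -/y2 -/a in h2.
pose r1 := Rc (ip x' y2); pose r2 := Rc (ip A y2).
have hr1 : r1 ^+ 2 <= eta * a.
  apply: le_trans (Re_le_cn2 _) _; by rewrite (ipC hip y2 x') cn2J.
have hr2 : r2 ^+ 2 <= eta * a.
  apply: le_trans (Re_le_cn2 _) _; by rewrite (ipC hip y2 A) cn2J.
have eAB : Rc (ip A B) = r1 - r2.
  by rewrite /B (ipBr hip) -{1}hx' ip_it ReD ReN.
have hz : nsq (l%:C *: A + B) = l ^+ 2 * a + nsq B + 2 * l * (r1 - r2).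
  by rewrite (nsqD hip) (nsqZ hip) cn2R (ipZl hip) ReM /= eAB mul0r subr0 mulrA.
rewrite eqz hz in hk.
have y1 := young l (nsq_ge0 hip A) (ltW eta0) (_ : (- r1) ^+ 2 <= eta * a).
have y2' := young l (nsq_ge0 hip A) (ltW eta0) hr2.
rewrite sqrrN in y1; have {}y1 := y1 hr1.
have a0 : 0 <= a := nsq_ge0 hip A.
have b0 : 0 <= nsq B := nsq_ge0 hip B.
have l1 : 1 <= l ^+ 2 by rewrite /l; nra.
have lC : C <= l ^+ 2 by rewrite /l; nra.
have main : l ^+ 2 * a / 2 + nsq B < 9 * eta by nra.
have la : a <= l ^+ 2 * a by nra.
have Ca : C * a <= l ^+ 2 * a by nra.
split.
  rewrite -/A; rewrite /eta in main; nra.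
have ey : y = s + y2 by rewrite /y2 addrC subrK.
rewrite ey (itD k) opprD addrACA.
apply: le_lt_trans (nsq_le2 hip _ _) _.
have := hC k; rewrite -/A -/a -/B => hCk.
rewrite /eta in main; nra.
Qed.

Lemma ret1 : recurrent ip U -> forall x (eps : R), 0 < eps ->
  exists k, (0 < k)%N /\ nsq (iter k U x - x) < eps.
Proof.
move=> hrec x eps eps0.
pose e := Num.sqrt (eps / 4).
have e0 : 0 < e by rewrite sqrtr_gt0 divr_gt0.
have e2 : e ^+ 2 = eps / 4 by rewrite sqr_sqrtr // ltW // divr_gt0.
have hW : hopen ip (fun y => hdist ip x y < e).
  move=> y hy; exists (e - hdist ip x y); first by rewrite subr_gt0.
  move=> w hw; apply: le_lt_trans (hdist_tri hip x y w) _; lra.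
have hWx : exists y, hdist ip x y < e.
  by exists x; rewrite /hdist subrr hnormE (nsq0 hip) sqrtr0.
have [k [k0 [y [Wy Wky]]]] := hrec _ hW hWx.
exists k; split => //.
move: Wy Wky; rewrite /hdist !(hnorm_lt hip _ e0) => h1 h2.
have -> : iter k U x - x = iter k U (x - y) + - (x - iter k U y).
  by rewrite itB opprB addrA subrK.
apply: le_lt_trans (nsq_le2 hip _ _) _.
rewrite nsq_it (nsqN hip); lra.
Qed.

Lemma retL : recurrent ip U -> forall x M (eps : R), 0 < eps ->
  exists k, (M < k)%N /\ nsq (iter k U x - x) < eps.
Proof.
move=> hrec x M; elim: M => [|M IH] eps eps0; first exact: ret1.
have [k [hk he]] := IH eps eps0.
have [k1|kn1] := eqVneq k M.+1; last first.
  by exists k; split => //; rewrite ltn_neqAle eq_sym kn1 /=.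
subst k.
have [d0|dn0] := eqVneq (nsq (iter M.+1 U x - x)) 0.
  have fx : iter M.+1 U x = x.
    by have /eqP := nsq_eq0 hip d0; rewrite subr_eq0 => /eqP.
  exists (M.+1 + M.+1)%N; split; first by rewrite -{1}(addn0 M.+1) ltn_add2l.
  by rewrite iterD !fx subrr (nsq0 hip).
have dpos : 0 < nsq (iter M.+1 U x - x) by rewrite lt0r dn0 nsq_ge0.
have mpos : 0 < Num.min eps (nsq (iter M.+1 U x - x)) by rewrite lt_min eps0 dpos.
clear hk he.
have [k [hk hek]] := IH _ mpos.
rewrite lt_min in hek; case/andP: hek => hek1 hek2.
exists k; split => //.
rewrite ltn_neqAle hk andbT eq_sym; apply/eqP => kM; subst k; by rewrite ltxx in hek2.
Qed.

Lemma multi (d : nat -> V) n (eps : R) : 0 < eps -> exists z (del : R), 0 < del /\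
  forall k, nsq (iter k U z - z) < del ->
    forall i, (i <= n)%N -> nsq (iter k U (d i) - d i) < eps.
Proof.
elim: n eps => [|n IH] eps eps0.
  exists (d 0%N), eps; split => // k hk i; rewrite leqn0 => /eqP ->; exact: hk.
have [z' [del' [del0 hz']]] := IH eps eps0.
have mpos : 0 < Num.min eps del' by rewrite lt_min eps0 del0.
have [z [del [dpos hz]]] := key z' (d n.+1) mpos.
exists z, del; split => // k hk i hi.
have [h1 h2] := hz k hk.
rewrite lt_min in h1; rewrite lt_min in h2.
case/andP: h1 => _ h1; case/andP: h2 => h2 _.
move: hi; rewrite leq_eqVlt ltnS => /orP [/eqP ->|hi] //.
exact: hz'.
Qed.

Lemma rec_rigid : hseparable ip -> recurrent ip U -> rigid ip U.
Proof.
move=> [d hd] hrec.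
have G : forall n M, exists k, (M < k)%N /\
    forall i, (i <= n)%N -> nsq (iter k U (d i) - d i) < (n.+1%:R)^-1.
  move=> n M.
  have ipos : 0 < (n.+1%:R : R)^-1 by rewrite invr_gt0 ltr0n.
  have [z [del [del0 hz]]] := multi d n ipos.
  have [k [hk hk2]] := retL hrec z M del0.
  by exists k; split => //; exact: hz.
pose G' := fun n M => constructive_indefinite_description _ (G n M).
pose ks := fix ks (n : nat) : nat :=
  match n with 0 => sval (G' 0%N 0%N) | m.+1 => sval (G' m.+1 (ks m)) end.
have ksS : forall n, ks n.+1 = sval (G' n.+1 (ks n)) by [].
have ks0 : ks 0%N = sval (G' 0%N 0%N) by [].
have ksspec : forall n, forall i, (i <= n)%N ->
    nsq (iter (ks n) U (d i) - d i) < (n.+1%:R)^-1.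
  by case=> [|n]; [rewrite ks0; case: (svalP (G' 0%N 0%N)) | rewrite ksS; case: (svalP (G' n.+1 (ks n)))].
have ksinc : forall n, (ks n < ks n.+1)%N.
  by move=> n; rewrite ksS; case: (svalP (G' n.+1 (ks n))).
have kspos : forall n, (0 < ks n)%N.
  case=> [|n]; first by rewrite ks0; case: (svalP (G' 0%N 0%N)).
  exact: leq_ltn_trans (leq0n _) (ksinc n).
exists ks; split => // x e e0.
have e30 : 0 < e / 3 by rewrite divr_gt0.
have [j hj] := hd x (e / 3) e30.
pose t := (e / 3) ^+ 2.
have t0 : 0 < t by rewrite exprn_gt0.
have ti0 : 0 < t^-1 by rewrite invr_gt0.
have hb := archi_boundP (ltW ti0).
pose N0 := Num.Def.archi_bound t^-1.
exists (maxn N0 j) => n hn.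
rewrite geq_max in hn; case/andP: hn => hn1 hn2.
have hnt : (n.+1%:R : R)^-1 < t.
  have : (N0%:R : R) <= n%:R by rewrite ler_nat.
  have : (n%:R : R) + 1 = n.+1%:R by rewrite -natr1.
  have : 0 < (n.+1%:R : R) by rewrite ltr0n.
  move=> h1 h2 h3.
  rewrite -div1r ltr_pdivrMr //.
  have : t^-1 < n.+1%:R by rewrite -/N0 in hb; lra.
  move=> h; have : t * t^-1 < t * n.+1%:R by rewrite ltr_pM2l.
  by rewrite mulfV // gt_eqF.
have h1 := ksspec n j hn2.
have h2 : hnorm ip (iter (ks n) U (d j) - d j) < e / 3.
  by rewrite (hnorm_lt hip _ e30) -/t; exact: lt_trans h1 hnt.
rewrite /hdist.
have -> : iter (ks n) U x - x =
  (iter (ks n) U (x - d j) + (iter (ks n) U (d j) - d j)) + (d j - x).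
  by rewrite itB !addrA !subrK.
apply: le_lt_trans (hnormD hip _ _) _.
have := hnormD hip (iter (ks n) U (x - d j)) (iter (ks n) U (d j) - d j).
have -> : hnorm ip (iter (ks n) U (x - d j)) = hdist ip x (d j) by rewrite /hdist !hnormE nsq_it.
have -> : hnorm ip (d j - x) = hdist ip x (d j) by rewrite (hdistC hip).
lra.
Qed.

Lemma rigid_rec : rigid ip U -> recurrent ip U.
Proof.
move=> [k [hk0 _ hconv]] W hW [x Wx].
have [e e0 he] := hW x Wx.
have [N hN] := hconv x e e0.
exists (k N); split => //; exists x; split => //.
apply: he; rewrite (hdistC hip); exact: hN.
Qed.
End U.

Theorem proposition9p3 (R : realType) (V : lmodType R[i]) (ip : V -> V -> R[i])
    (hH : hilbert_space ip) (hsep : hseparable ip)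
    (U : V -> V) (hU : unitary ip U) :
  recurrent ip U <-> rigid ip U.
Proof.
case: hH => hip _; split.
  move=> hr; apply: (rec_rigid hip hU hsep hr).
move=> hr; exact: (rigid_rec hip hr).
Qed.
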